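(* Let $G$ be a connected graph whose girth $g$ is finite and even. Then there is an $N \in \mathbb{N}$ such that $P_{DP}(G,m) < P(G,m)$ for every integer $m \geq N$.
   Context: All graphs are finite and simple. $P(G,m)$ denotes the chromatic polynomial of $G$, i.e. the number of proper colorings of $G$ with colors from $[m]=\{1,\dots,m\}$. A cover of a graph $G$ is a pair $\mathcal{H}=(L,H)$ where $H$ is a graph and $L:V(G)\to\mathcal{P}(V(H))$ satisfies: (1) the sets $L(u)$, $u\in V(G)$, partition $V(H)$; (2) for every $u\in V(G)$, $H[L(u)]$ is complete; (3) if $E_H(L(u),L(v))\neq\emptyset$ then $u=v$ or $uv\in E(G)$; (4) if $uv\in E(G)$ then $E_H(L(u),L(v))$ is a matching (possibly empty). Here $E_H(S,U)$ is the set of edges of $H$ with one endpoint in $S$ and the other in $U$. The cover is $m$-fold if $|L(u)|=m$ for all $u$. An $\mathcal{H}$-coloring of $G$ is an independent set $I$ in $H$ with $|I|=|V(G)|$ (equivalently $|I\cap L(u)|=1$ for each $u$). $P_{DP}(G,\mathcal{H})$ is the number of $\mathcal{H}$-colorings of $G$, and the DP color function $P_{DP}(G,m)$ is the minimum of $P_{DP}(G,\mathcal{H})$ over all $m$-fold covers $\mathcal{H}$ of $G$. *)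

(* Defs.v *)
From mathcomp Require Import all_boot.
Set Implicit Arguments. Unset Strict Implicit. Unset Printing Implicit Defensive.

(* A finite simple graph G is a pair (T, e) with T : finType the vertex set and
   e : rel T a symmetric irreflexive adjacency relation (hypotheses of the theorem). *)

Section Graphs.
Variable T : finType.
Variable e : rel T.

Definition proper_coloring (m : nat) (f : {ffun T -> 'I_m}) : bool :=
  [forall x, forall y, e x y ==> (f x != f y)].

Definition chrom_poly (m : nat) : nat :=
  #|[set f : {ffun T -> 'I_m} | proper_coloring f]|.

Definition graph_cycle (s : seq T) : bool :=
  [&& 3 <= size s, uniq s & cycle e s].

Definition is_girth (g : nat) : Prop :=
  (exists s, graph_cycle s /\ size s = g) /\
  (forall s, graph_cycle s -> g <= size s).

Definition is_cover (U : finType) (h : rel U) (L : T -> {set U}) : bool :=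
  [&&
      [forall x, ~~ h x x], [forall x, forall y, h x y == h y x],
      [forall x, #|[set u | x \in L u]| == 1],
      [forall u, forall x, forall y,
          [&& x \in L u, y \in L u & x != y] ==> h x y],
      [forall u, forall v, forall x, forall y,
          [&& x \in L u, y \in L v & h x y] ==> ((u == v) || e u v)] &
      [forall u, forall v, e u v ==>
          [forall x, (x \in L u) ==> (#|[set y in L v | h x y]| <= 1)]
       && [forall y, (y \in L v) ==> (#|[set x in L u | h x y]| <= 1)]]].

Definition is_mfold_cover (m : nat) (U : finType) (h : rel U) (L : T -> {set U}) : bool :=
  is_cover h L && [forall u, #|L u| == m].

(* Number of H-colourings: independent sets I of H with |I| = |V(G)|. *)
Definition DP_count (U : finType) (h : rel U) : nat :=
  #|[set I : {set U} | [forall x in I, forall y in I, ~~ h x y] && (#|I| == #|T|)]|.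

(* Every m-fold cover has exactly #|T| * m vertices, so up to
   isomorphism (which preserves the number of H-colourings) every m-fold cover has
   vertex set 'I_(#|T| * m); the minimum ranges over all such covers (a finite
   family).  The neutral element m ^ #|T| is an upper bound of every
   P_DP(G,H) (at most one vertex per L(u) in an independent set) and is attained by
   the cover with no cross edges, so it does not affect the minimum. *)
Definition cover_data (m : nat) : finType :=
  ({ffun 'I_(#|T| * m) * 'I_(#|T| * m) -> bool} * {ffun T -> {set 'I_(#|T| * m)}})%type.

Definition DP_color_fn (m : nat) : nat :=
  \big[minn/m ^ #|T|]_(C : cover_data m
        | is_mfold_cover m (fun x y => C.1 (x, y)) (fun u => C.2 u))
     DP_count (fun x y => C.1 (x, y)).

End Graphs.

(* Main.v *)
Require Import Defs.
From mathcomp Require Import all_boot all_order all_algebra.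
From Stdlib Require Import FunctionalExtensionality.
Set Implicit Arguments. Unset Strict Implicit. Unset Printing Implicit Defensive.

Section Det.
Variable T : finType.
Variable J : {set T * T}.

Definition adj (x y : T) : bool := ((x, y) \in J) || ((y, x) \in J).

Lemma adj_sym : symmetric adj.
Proof. by move=> x y; rewrite /adj orbC. Qed.

Fixpoint detp (ws : seq (T * T)) : bool :=
  if ws is (x, w) :: ws' then
    [&& adj x w, x \notin w :: map snd ws', w \notin map snd ws' & detp ws']
  else true.

Lemma detp_inj (C : Type) (ws : seq (T * T)) (f f' : T -> C) :
  detp ws -> (forall p, p \in J -> f p.1 = f p.2) ->
  (forall p, p \in J -> f' p.1 = f' p.2) ->
  (forall x, x \notin map snd ws -> f x = f' x) -> forall x, f x = f' x.
Proof.
move=> + cf cf'; elim: ws => [|[x w] ws IH] /=; first by move=> _ H y; apply: H.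
case/and4P=> axw xn wn dws H; apply: IH => // y yn.
have fxw : forall h : T -> C, (forall p, p \in J -> h p.1 = h p.2) -> h x = h w.
  move=> h ch; case/orP: axw => [/ch //| /ch /= ->] //.
case: (eqVneq y w) => [->|ynw].
  by rewrite -(fxw f cf) -(fxw f' cf'); apply: H.
by apply: H; rewrite inE negb_or ynw.
Qed.

Lemma detp_uniq ws : detp ws -> uniq (map snd ws).
Proof. by elim: ws => [|[x w] ws IH] //= /and4P[_ _ -> /IH]. Qed.

Variable E : {set T * T}.
Hypothesis JE : J \subset E.
Hypothesis Eanti : forall x y, (x, y) \in E -> (y, x) \notin E.

Definition rep (p : T * T) : T * T := if p \in E then p else (p.2, p.1).

Fixpoint Rset (ws : seq (T * T)) : {set T * T} :=
  if ws is p :: ws' then rep p |: Rset ws' else set0.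

Lemma Rset_card ws : #|Rset ws| <= size ws.
Proof.
elim: ws => [|p ws IH] /=; first by rewrite cards0.
by rewrite cardsU1; case: (_ \notin _) => /=; rewrite ?add1n ?add0n // ltnW.
Qed.

Lemma Rset_mem ws q : q \in Rset ws -> exists2 p, p \in ws & q = rep p.
Proof.
elim: ws => [|p ws IH] /=; first by rewrite inE.
case/setU1P => [->|/IH [p' p'in ->]]; first by exists p; rewrite ?inE ?eqxx.
by exists p' => //; rewrite inE p'in orbT.
Qed.


Lemma Rset_in ws p : p \in ws -> rep p \in Rset ws.
Proof.
elim: ws => [|q ws IH] //=; rewrite inE => /orP[/eqP->|/IH]; first by apply/setU1P; left.
by move=> h; rewrite setU1r.
Qed.

Lemma rep_adj x w : adj x w -> rep (x, w) \in J.
Proof.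
rewrite /rep /adj; case/orP=> h.
  by rewrite (subsetP JE _ h).
have hE := subsetP JE _ h.
by rewrite (negbTE (Eanti hE)).
Qed.

Lemma rep_coords p : (rep p).1 \in [:: p.1; p.2] /\ (rep p).2 \in [:: p.1; p.2].
Proof. by rewrite /rep; case: ifP; rewrite !inE !eqxx ?orbT. Qed.

Lemma detp_card ws : detp ws -> #|Rset ws| = size ws /\ Rset ws \subset J /\
  forall q, q \in Rset ws -> (q.1 \in map snd ws) || (q.2 \in map snd ws).
Proof.
elim: ws => [|[x w] ws IH] /=; first by rewrite cards0 sub0set; split => //; split => // q; rewrite inE.
case/and4P=> axw xn wn /IH [c [s h]].
have hq : rep (x, w) \notin Rset ws.
  apply/negP=> /h; case: (rep_coords (x, w)) => /=.
  have xn' : x \notin map snd ws by move: xn; rewrite inE negb_or => /andP[].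
  rewrite !inE => /orP[]/eqP-> /orP[]/eqP->; rewrite ?(negbTE wn) ?(negbTE xn') //.
split; first by rewrite cardsU1 hq c.
split; first by rewrite subUset sub1set rep_adj.
move=> q /setU1P[->|/h]; last by rewrite !inE => /orP[]->; rewrite ?orbT.
by rewrite /rep; case: ifP => _ /=; rewrite !inE eqxx ?orbT.
Qed.

End Det.
Section PathLemmas.
Variable T : finType.
Variable J : {set T * T}.

Lemma map_snd_zip_cons (u : T) p : map snd (zip (u :: p) p) = p.
Proof. by rewrite -/(unzip2 _) unzip2_zip //= leqnSn. Qed.

Lemma path_detp u p t : path (adj J) u p -> uniq (u :: p) -> detp J t ->
  all (fun z => z \notin map snd t) (u :: p) -> detp J (zip (u :: p) p ++ t).
Proof.
elim: p u => [|w p IH] u //= /andP[auw pw] /andP[un uw] dt /andP[ut /andP[wt at']].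
rewrite auw /=.
have -> : [seq i.2 | i <- zip (w :: p) p ++ t] = p ++ map snd t.
  by rewrite map_cat map_snd_zip_cons.
move: un uw => /=; rewrite inE negb_or => /andP[uw' up] /andP[wp up'].
rewrite !inE !mem_cat !negb_or uw' up ut wp wt /=.
by apply: IH => //=; rewrite ?wp ?up' ?wt.
Qed.

Lemma connect_path u v : connect (adj J) u v ->
  exists p, [/\ path (adj J) u p, last u p = v & uniq (u :: p)].
Proof.
case/connectP=> p pp ->; case: (shortenP pp) => p' pp' up' _.
by exists p'.
Qed.

Lemma shortcut x q a b : path (adj J) x q -> a \in x :: q -> b \in x :: q ->
  a != b -> adj J a b -> (a, b) \notin zip (x :: q) q -> (b, a) \notin zip (x :: q) q ->
  exists q', [/\ path (adj J) x q', last x q' = last x q, subseq (x :: q') (x :: q)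
                & size q' < size q].
Proof.
have key : forall x y q1 q2 b, path (adj J) x (y :: q1 ++ b :: q2) -> adj J x b ->
  exists q', [/\ path (adj J) x q', last x q' = last x (y :: q1 ++ b :: q2),
        subseq (x :: q') (x :: y :: q1 ++ b :: q2) & size q' < size (y :: q1 ++ b :: q2)].
  move=> x0 y q1 q2 b0 pth axb; exists (b0 :: q2); split.
  - move: pth => /= /andP[_]; rewrite cat_path /= => /and3P[_ _ ->].
    by rewrite axb.
  - by rewrite /= last_cat.
  - apply: (@cat_subseq _ [:: x0] _ [:: x0]) => //.
    by rewrite -cat_cons suffix_subseq.
  - by rewrite /= size_cat /= addnS ltnS ltnS leq_addl.
elim: q x => [|y q IH] x /=.
  by move=> _; rewrite !inE => /eqP-> /eqP->; rewrite eqxx.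
move=> /andP[axy pyq] ain bin anb aab zab zba.
move: zab zba; rewrite !inE !negb_or => /andP[nab zab] /andP[nba zba].
case: (eqVneq a x) => [ax|anx].
  subst a.
  have bq : b \in q.
    by move: bin; rewrite !inE (eq_sym b x) (negbTE anb) /= => /orP[/eqP bq|//];
       move: nab; rewrite bq eqxx.
  case/splitPr: bq pyq => q1 q2 pyq.
  by apply: key => //=; rewrite axy.
case: (eqVneq b x) => [bx|bnx].
  subst b.
  have aq : a \in q.
    by move: ain; rewrite !inE (negbTE anx) /= => /orP[/eqP aq|//];
       move: nba; rewrite aq eqxx.
  case/splitPr: aq pyq => q1 q2 pyq.
  by apply: key => //=; rewrite ?axy // adj_sym.
have ain' : a \in y :: q by move: ain; rewrite inE (negbTE anx).
have bin' : b \in y :: q by move: bin; rewrite inE (negbTE bnx).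
case: (IH y pyq ain' bin' anb aab zab zba) => q' [p1 p2 p3 p4].
exists (y :: q'); split.
- by rewrite /= axy.
- by rewrite /= -p2.
- have h : subseq (x :: y :: q') (x :: y :: q).
    by rewrite -(cat1s x (y :: q')) -(cat1s x (y :: q)); apply: cat_subseq.
  exact h.
- by rewrite /=.
Qed.

End PathLemmas.
Lemma in_zip (T1 T2 : eqType) (s : seq T1) (t : seq T2) x w :
  (x, w) \in zip s t -> x \in s /\ w \in t.
Proof.
elim: s t => [|y s IH] [|z t] //=.
rewrite inE => /orP[/eqP[-> ->]|/IH [h1 h2]]; first by rewrite !inE !eqxx.
by rewrite !inE h1 h2 !orbT.
Qed.

Lemma zip_index (T1 : eqType) (y : T1) s x w : uniq (y :: s) ->
  (x, w) \in zip (y :: s) s -> index w (y :: s) = (index x (y :: s)).+1.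
Proof.
elim: s y => [|z s IH] y; first by [].
move=> /andP[ys uzs].
have yz : y != z by move: ys; rewrite inE negb_or => /andP[].
have ys' : y \notin s by move: ys; rewrite inE negb_or => /andP[].
rewrite [zip _ _]/= inE => /orP[/eqP[-> ->]|h].
  by rewrite /= !eqxx (negbTE yz).
have [hx hw] := in_zip h.
have yx : (y == x) = false by apply/negbTE; apply: contraNneq ys => ->.
have yw : (y == w) = false.
  by apply/negbTE; apply: contraNneq ys' => ->.
rewrite -[index w _]/(if y == w then 0 else (index w (z :: s)).+1) -[index x _]/(if y == x then 0 else (index x (z :: s)).+1).
by rewrite yx yw (IH z).
Qed.

Lemma path_all (T1 : Type) (r : rel T1) x s :
  path r x s = all (fun p => r p.1 p.2) (zip (x :: s) s).
Proof. by elim: s x => [|y s IH] x //=; rewrite IH. Qed.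

Section Graph.
Variable T : finType.
Variable e : rel T.
Hypothesis e_sym : symmetric e.
Hypothesis e_irr : irreflexive e.
Variable g : nat.
Hypothesis hg : is_girth e g.
Variables u v : T.
Hypothesis euv : e u v.

Definition Ep : {set T * T} :=
  [set p | [&& e p.1 p.2, enum_rank p.1 < enum_rank p.2, p != (u, v) & p != (v, u)]].

Lemma Eanti x y : (x, y) \in Ep -> (y, x) \notin Ep.
Proof.
rewrite !inE /= => /and4P[_ h _ _]; apply/negP => /and4P[_ h' _ _].
by move: (ltn_trans h h'); rewrite ltnn.
Qed.

Lemma adj_e (J : {set T * T}) x y : J \subset Ep -> adj J x y -> e x y.
Proof.
move=> JE; case/orP=> /(subsetP JE); rewrite inE /= => /and4P[] //.
by rewrite e_sym.
Qed.

Lemma adj_uv (J : {set T * T}) : J \subset Ep -> ~~ adj J u v.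
Proof.
move=> JE; apply/negP; case/orP=> /(subsetP JE); rewrite inE /= => /and4P[_ _];
by rewrite eqxx // andbF.
Qed.

Lemma lemma_a (J : {set T * T}) p : J \subset Ep -> path (adj J) u p -> last u p = v ->
  uniq (u :: p) -> g <= (size p).+1.
Proof.
move=> JE pp lp up.
have gc : graph_cycle e (u :: p).
  rewrite /graph_cycle up /= rcons_path.
  have -> : path e u p by apply: sub_path pp => x y; apply: adj_e.
  rewrite lp e_sym euv andbT /=.
  case: p pp lp up => [|w [|w' p]] //=.
  - by move=> _ uv; move: euv; rewrite uv e_irr.
  - by move=> /andP[auw _] wv _; move: (adj_uv JE); rewrite -wv auw.
by case: hg => _ /(_ _ gc).
Qed.

Lemma lemma_b (J : {set T * T}) : J \subset Ep -> connect (adj J) u v -> g <= #|J| ->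
  exists W, [/\ detp J W, u \notin map snd W & g <= size W].
Proof.
move=> JE /connect_path [p [pp lp up]] gJ.
have ga := lemma_a JE pp lp up.
have szz : size (zip (u :: p) p) = size p by rewrite size_zip /=; apply/minn_idPr; rewrite leqnSn.
have unp : u \notin p by move: up => /andP[].
case: (leqP g (size p)) => hgp.
  exists (zip (u :: p) p ++ [::]); split.
  - by apply: path_detp => //; apply/allP.
  - by rewrite cats0 map_snd_zip_cons.
  - by rewrite cats0 szz.
have gp : g = (size p).+1 by apply/eqP; rewrite eqn_leq ga hgp.
have : ~~ (J \subset Rset Ep (zip (u :: p) p)).
  apply/negP => /subset_leq_card; apply/negP; rewrite -ltnNge.
  apply: (leq_ltn_trans (Rset_card Ep _)); rewrite szz.
  by apply: leq_trans hgp gJ.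
case/subsetPn => [[a b] qJ qR].
have qE := subsetP JE _ qJ.
have eab : e a b by move: qE; rewrite inE => /and4P[].
have anb : a != b by apply: contraTneq eab => ->; rewrite e_irr.
have aab : adj J a b by rewrite /adj qJ.
have pd : forall t, detp J t -> all (fun z => z \notin map snd t) (u :: p) ->
    detp J (zip (u :: p) p ++ t) by move=> t; apply: path_detp.
case: (boolP (a \in u :: p)) => ha; last first.
  exists (zip (u :: p) p ++ [:: (b, a)]); split.
  - apply: pd; first by rewrite /= adj_sym aab !inE eq_sym anb.
    by apply/allP => z zin /=; rewrite inE; apply: contraNneq ha => <-.
  - rewrite map_cat map_snd_zip_cons mem_cat negb_or unp /= inE.
    by apply: contraNneq ha => <-; rewrite mem_head.
  - by rewrite size_cat szz addn1 gp.
case: (boolP (b \in u :: p)) => hb; last first.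
  exists (zip (u :: p) p ++ [:: (a, b)]); split.
  - apply: pd; first by rewrite /= aab !inE anb.
    by apply/allP => z zin /=; rewrite inE; apply: contraNneq hb => <-.
  - rewrite map_cat map_snd_zip_cons mem_cat negb_or unp /= inE.
    by apply: contraNneq hb => <-; rewrite mem_head.
  - by rewrite size_cat szz addn1 gp.
exfalso.
have nz1 : (a, b) \notin zip (u :: p) p.
  apply: contra qR => /(Rset_in Ep) h.
  by rewrite /rep qE in h.
have nz2 : (b, a) \notin zip (u :: p) p.
  apply: contra qR => /(Rset_in Ep) h.
  by rewrite /rep (negbTE (Eanti qE)) in h.
case: (shortcut pp ha hb anb aab nz1 nz2) => q' [pq' lq' sq' szq'].
have uq' := subseq_uniq sq' up.
have := lemma_a JE pq' (etrans lq' lp) uq'.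
rewrite gp ltnS; apply/negP; rewrite -ltnNge.
by apply: leq_trans szq' _.
Qed.

End Graph.
Section Count.
Variable T : finType.
Variable m : nat.
Variable c : 'I_m.
Variable u : T.

Definition constJ (J : {set T * T}) (f : {ffun T -> 'I_m}) :=
  [forall p in J, f p.1 == f p.2].

Definition Ncount (J : {set T * T}) : nat :=
  #|[set f : {ffun T -> 'I_m} | constJ J f && (f u == c)]|.

Lemma pffun_memK (K : seq T) (f : {ffun T -> 'I_m}) :
  (f \in pffun_on c [set x | x \notin K] predT) = [forall x in K, f x == c].
Proof.
apply/pffun_onP/forall_inP => [[sD _] x xK|h].
  apply/negPn/negP => fx; have := subsetP sD x fx; by rewrite inE xK.
split => //; apply/subsetP => x; rewrite !inE; apply: contra => xK.
by apply: h.
Qed.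

Lemma card_compl (K : seq T) : uniq K -> #|[set x | x \notin K]| + size K = #|T|.
Proof.
move=> uK; rewrite -(card_uniqP uK).
have -> : #|[set x | x \notin K]| = #|[predC K]| by apply: eq_card => x; rewrite !inE.
by rewrite addnC cardC.
Qed.

Lemma card_pf (K : seq T) : uniq K -> #|pffun_on c [set x | x \notin K] predT| * m ^ size K = m ^ #|T|.
Proof.
move=> uK; rewrite card_pffun_on -(card_compl uK) expnD.
by rewrite -[#|predT|]/#|'I_m| card_ord.
Qed.

Lemma N_upper (J : {set T * T}) W : detp J W -> u \notin map snd W -> Ncount J * m ^ (size W).+1 <= m ^ #|T|.
Proof.
move=> dW uW.
set K := u :: map snd W.
have uK : uniq K by rewrite /K /= uW (detp_uniq dW).
have szK : size K = (size W).+1 by rewrite /= size_map.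
set A := [set f : {ffun T -> 'I_m} | constJ J f && (f u == c)].
pose phi (f : {ffun T -> 'I_m}) := [ffun x => if x \in K then c else f x].
have inj : {in A &, injective phi}.
  move=> f f'; rewrite !inE => /andP[cf fu] /andP[cf' fu'] eqf.
  apply/ffunP; apply: (detp_inj dW).
  - by move=> p pJ; apply/eqP; move/forall_inP: cf; apply.
  - by move=> p pJ; apply/eqP; move/forall_inP: cf'; apply.
  move=> x xW; case: (eqVneq x u) => [->|xu]; first by rewrite (eqP fu) (eqP fu').
  have := congr1 (fun h : {ffun T -> 'I_m} => h x) eqf; rewrite /phi !ffunE.
  by rewrite /K inE (negbTE xu) (negbTE xW).
have sub : phi @: A \subset pffun_on c [set x | x \notin K] predT.
  apply/subsetP => h /imsetP [f _ ->]; rewrite pffun_memK.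
  by apply/forall_inP => x xK; rewrite ffunE xK.
rewrite /Ncount -/A -szK -(card_in_imset inj) -(card_pf uK) leq_mul2r.
by rewrite (subset_leq_card sub) orbT.
Qed.

Lemma N_lower (J : {set T * T}) (K : seq T) : uniq K -> u \in K ->
  (forall p, p \in J -> (p.1 \in K) && (p.2 \in K)) ->
  m ^ #|T| <= Ncount J * m ^ size K.
Proof.
move=> uK uinK JK.
rewrite -(card_pf uK) leq_mul2r; apply/orP; right.
apply: subset_leq_card; apply/subsetP => f; rewrite pffun_memK inE => /forall_inP h.
rewrite (h _ uinK) andbT; apply/forall_inP => p /JK /andP[h1 h2].
by rewrite (eqP (h _ h1)) (eqP (h _ h2)).
Qed.

End Count.
Section IE.
Import GRing.Theory Num.Theory.
Local Open Scope ring_scope.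
Variable T : finType.
Variable e : rel T.
Hypothesis e_sym : symmetric e.
Hypothesis e_irr : irreflexive e.
Variable g : nat.
Hypothesis hg : is_girth e g.
Variables u v : T.
Hypothesis euv : e u v.
Variable m : nat.
Variables c0 c1 : 'I_m.
Hypothesis c01 : c0 != c1.

Definition swp (k : 'I_m) : 'I_m := if k == c0 then c1 else if k == c1 then c0 else k.

Lemma swpK : involutive swp.
Proof.
move=> k; rewrite /swp; case: (eqVneq k c0) => [->|k0]; first by rewrite eq_sym (negbTE c01) eqxx.
case: (eqVneq k c1) => [->|k1]; first by rewrite eqxx.
by rewrite (negbTE k0) (negbTE k1).
Qed.

Lemma swp_eq a b : (swp a == b) = (a == swp b).
Proof. by apply/eqP/eqP => [<-|->]; rewrite swpK. Qed.

Definition okE (f : {ffun T -> 'I_m}) := [forall p in Ep e u v, f p.1 != f p.2].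
Definition cJ (J : {set T * T}) (f : {ffun T -> 'I_m}) :=
  [forall p in J, (p \in Ep e u v) && (f p.1 == f p.2)].
Definition wt (f : {ffun T -> 'I_m}) : int := (f v == swp (f u))%:R - (f v == f u)%:R.
Definition MJ (J : {set T * T}) : int := \sum_f (cJ J f)%:R * wt f.

Lemma cardZ (P : pred {ffun T -> 'I_m}) : (#|[set f | P f]|%:R : int) = \sum_f (P f)%:R.
Proof.
rewrite -sum1_card natr_sum big_mkcond /=; apply: eq_bigr => f _.
by rewrite inE; case: (P f).
Qed.

Lemma prod_bool (I : finType) (A : pred I) (b : I -> bool) :
  \prod_(i in A) ((b i)%:R : int) = ([forall i in A, b i])%:R.
Proof.
case: (boolP [forall i in A, b i]) => [/forall_inP h|/forall_inPn [i iA nb]].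
  by apply: big1 => i /h ->.
by rewrite (bigD1 i) //= (negbTE nb) mul0r.
Qed.

Lemma ok_expand (f : {ffun T -> 'I_m}) :
  ((okE f)%:R : int) = \sum_(J : {set T * T}) (-1) ^+ #|J| * (cJ J f)%:R.
Proof.
have -> : ((okE f)%:R : int) =
    \prod_(p : T * T) (- ((p \in Ep e u v) && (f p.1 == f p.2))%:R + 1).
  transitivity (\prod_(p : T * T) ((~~ ((p \in Ep e u v) && (f p.1 == f p.2)))%:R : int)).
    rewrite prod_bool /okE; congr (_%:R); congr (nat_of_bool _); apply/forallP/forallP => h p; have := h p;
    by case: (p \in Ep e u v); case: (f p.1 == f p.2).
  by apply: eq_bigr => p _; rewrite addrC; case: (_ && _).
rewrite (bigA_distr 1 +%R); apply: eq_bigr => J _.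
rewrite -big_mkcond /= prodrN prod_bool.
by [].
Qed.

Lemma delta_eq :
  (#|[set f | okE f && (f u != f v)]|%:R - #|[set f | okE f && (f v != swp (f u))]|%:R : int)
  = \sum_(J : {set T * T}) (-1) ^+ #|J| * MJ J.
Proof.
rewrite !cardZ -sumrB.
transitivity (\sum_f (okE f)%:R * wt f).
  apply: eq_bigr => f _; rewrite /wt (eq_sym (f v) (f u)).
  by case: (okE f); case: (f u == f v); case: (f v == swp (f u)); rewrite /= ?mul1r ?mul0r.
under eq_bigr => f _ do rewrite ok_expand mulr_suml.
rewrite exchange_big /=; apply: eq_bigr => J _.
rewrite /MJ mulr_sumr; apply: eq_bigr => f _.
by rewrite mulrA.
Qed.

Lemma MJ_notsub (J : {set T * T}) : ~~ (J \subset Ep e u v) -> MJ J = 0.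
Proof.
case/subsetPn => p pJ pE; apply: big1 => f _.
suff -> : cJ J f = false by rewrite mul0r.
apply/negP => /forall_inP /(_ p pJ); by rewrite (negbTE pE).
Qed.

Lemma cJ_const (J : {set T * T}) f : J \subset Ep e u v -> cJ J f = constJ J f.
Proof.
move=> JE; apply/forall_inP/forall_inP => h p pJ; first by case/andP: (h p pJ).
by rewrite (subsetP JE _ pJ) (h p pJ).
Qed.

Lemma const_connect (J : {set T * T}) (f : {ffun T -> 'I_m}) x y : constJ J f -> connect (adj J) x y -> f x = f y.
Proof.
move=> /forall_inP cf /connectP [p pp ->]; elim: p x pp => [|z p IH] x //= /andP[axz pz].
rewrite -(IH z pz); case/orP: axz => /cf /eqP //= ->; by [].
Qed.

Lemma MJ_conn (J : {set T * T}) : J \subset Ep e u v -> connect (adj J) u v ->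
  MJ J = - ((Ncount c0 u J)%:R + (Ncount c1 u J)%:R).
Proof.
move=> JE cuv; rewrite /Ncount !cardZ -big_split /= -sumrN; apply: eq_bigr => f _.
rewrite cJ_const //; case: (boolP (constJ J f)) => cf /=; last by rewrite mul0r addr0 oppr0.
rewrite mul1r /wt -(const_connect cf cuv) eqxx /swp.
case: (eqVneq (f u) c0) => [->|h0].
  by rewrite ?eqxx (negbTE c01) ?(eq_sym c1 c0) ?(negbTE c01).
case: (eqVneq (f u) c1) => [->|h1].
  by rewrite ?eqxx ?(eq_sym c1 c0) ?(negbTE c01).
by rewrite ?eqxx.
Qed.

Lemma MJ_notconn (J : {set T * T}) : J \subset Ep e u v -> ~~ connect (adj J) u v -> MJ J = 0.
Proof.
move=> JE ncuv.
pose K := [set x | connect (adj J) v x].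
pose rho (f : {ffun T -> 'I_m}) := [ffun x => if x \in K then swp (f x) else f x].
have rhoK : involutive rho.
  move=> f; apply/ffunP => x; rewrite !ffunE; case: (x \in K) => //; exact: swpK.
have uK : u \notin K.
  rewrite inE; apply: contra ncuv => h.
  by rewrite (sym_connect_sym (@adj_sym _ J)).
have vK : v \in K by rewrite inE connect0.
have cJr : forall f, cJ J (rho f) = cJ J f.
  move=> f; rewrite !cJ_const //; apply: eq_forallb_in => p pJ.
  have ap : adj J p.1 p.2 by rewrite /adj; case: p pJ => a b /= ->.
  have hK : (p.1 \in K) = (p.2 \in K).
    rewrite !inE; apply/idP/idP => h.
      by apply: connect_trans h (connect1 ap).
    by apply: connect_trans h (connect1 _); rewrite adj_sym.
  rewrite !ffunE hK; case: (p.2 \in K) => //.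
  by rewrite swp_eq swpK.
have wtr : forall f, wt (rho f) = - wt f.
  move=> f; rewrite /wt !ffunE (negbTE uK) vK swp_eq swpK.
  by rewrite (swp_eq (f v) (f u)) opprB.
have H : MJ J = - MJ J.
  rewrite {1}/MJ (reindex_inj (inv_inj rhoK)) /MJ -sumrN; apply: eq_bigr => f _.
  by rewrite cJr wtr mulrN.
by move/eqP: H; rewrite -addr_eq0 -mulr2n mulrn_eq0 /= => /eqP.
Qed.

End IE.
Section Final.
Import Order.TTheory GRing.Theory Num.Theory.
Variable T : finType.
Variable e : rel T.
Hypothesis e_sym : symmetric e.
Hypothesis e_irr : irreflexive e.
Variable g : nat.
Hypothesis hg : is_girth e g.
Variables u v : T.
Hypothesis euv : e u v.
Variable m : nat.
Variables c0 c1 : 'I_m.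
Hypothesis c01 : c0 != c1.
Variable p0 : seq T.
Hypothesis hc : graph_cycle e (u :: p0).
Hypothesis hsz : size (u :: p0) = g.
Hypothesis hv : last u p0 = v.
Hypothesis g_even : ~~ odd g.

Local Notation E := (Ep e u v).

Lemma connect_card (J : {set T * T}) : J \subset E -> connect (adj J) u v -> g <= #|J| + 1.
Proof.
move=> JE /connect_path [p [pp lp up]].
have ga := lemma_a e_sym e_irr hg euv JE pp lp up.
have dp : detp J (zip (u :: p) p ++ [::]) by apply: path_detp => //; apply/allP.
have [c [s _]] := detp_card JE (@Eanti _ e u v) dp.
have szz : size (zip (u :: p) p) = size p by rewrite size_zip /=; apply/minn_idPr; rewrite leqnSn.
rewrite cats0 szz in c; rewrite cats0 in s.
apply: (leq_trans ga); rewrite addn1 ltnS -c; exact: subset_leq_card s.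
Qed.

Definition Jp := Rset E (zip (u :: p0) p0).

Lemma g_ge4 : 4 <= g.
Proof.
move: hc; rewrite /graph_cycle hsz => /and3P[g3 _ _].
move: g3 g_even; rewrite leq_eqVlt => /orP[/eqP <-|] //.
Qed.

Lemma up0 : uniq (u :: p0).
Proof. by case/and3P: hc. Qed.

Lemma pp0 : path e u p0.
Proof. by case/and3P: hc => _ _; rewrite /= rcons_path => /andP[]. Qed.

Lemma zip_notuv x w : (x, w) \in zip (u :: p0) p0 -> ((x, w) != (u, v)) && ((x, w) != (v, u)).
Proof.
move=> h; have zi := zip_index up0 h.
have iv : index v (u :: p0) = size p0 by rewrite -hv index_last // up0.
have iu : index u (u :: p0) = 0%N by rewrite /= eqxx.
have s3 : 3 <= size p0 by have := g_ge4; rewrite -hsz.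
apply/andP; split; apply/negP => /eqP [ex ew]; subst x w.
  by move: zi; rewrite iv iu => sz; move: s3; rewrite sz.
by move: zi; rewrite iv iu.
Qed.

Lemma Jp_sub : Jp \subset E.
Proof.
apply/subsetP => q /Rset_mem [[x w] xin ->].
have exw : e x w by move: pp0; rewrite path_all => /allP /(_ _ xin).
have /andP[n1 n2] := zip_notuv xin.
rewrite /rep; case: ifP => // hE.
have xw : x != w by apply: contraTneq exw => ->; rewrite e_irr.
rewrite inE /= e_sym exw /=.
move: hE; rewrite inE /= exw n1 n2 !andbT => /negbT; rewrite -leqNgt leq_eqVlt => /orP[/eqP h|->].
  by move: xw; rewrite (enum_rank_inj (ord_inj h)) eqxx.
rewrite /=; apply/andP; split.
  by apply: contra n2 => /eqP[-> ->].
by apply: contra n1 => /eqP[-> ->].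
Qed.

Lemma rep_adj_Jp x w : (x, w) \in zip (u :: p0) p0 -> adj Jp x w.
Proof.
move=> h; have := Rset_in E h; rewrite /rep /adj; case: ifP => _ -> //.
by rewrite orbT.
Qed.

Lemma pJp : path (adj Jp) u p0.
Proof. by rewrite path_all; apply/allP => [[x w]] /rep_adj_Jp. Qed.

Lemma Jp_conn : connect (adj Jp) u v.
Proof. by apply/connectP; exists p0; rewrite ?pJp. Qed.

Lemma Jp_card : #|Jp| = size p0.
Proof.
have dp : detp Jp (zip (u :: p0) p0 ++ [::]) by apply: path_detp => //; [apply: pJp|apply: up0|apply/allP].
have [c _] := detp_card Jp_sub (@Eanti _ e u v) dp.
by rewrite cats0 size_zip /= in c; rewrite /Jp c; apply/minn_idPr; rewrite leqnSn.
Qed.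

Lemma Jp_coords q : q \in Jp -> (q.1 \in u :: p0) && (q.2 \in u :: p0).
Proof.
case/Rset_mem => [[x w] xin ->]; have [hx hw] := in_zip xin.
have hw' : w \in u :: p0 by rewrite inE hw orbT.
by rewrite /rep; case: ifP => _ /=; rewrite ?hx ?hw'.
Qed.


Local Open Scope ring_scope.

Lemma m_pos : (0 < m)%N.
Proof. by case: c0 => [k hk]; apply: leq_ltn_trans hk. Qed.

Lemma sgn_ge (k : nat) (X : int) : 0 <= X -> - X <= (-1) ^+ k * - X.
Proof.
move=> hX; rewrite -signr_odd; case: (odd k); rewrite ?expr0 ?expr1 ?mul1r ?mulN1r ?opprK //.
by apply: le_trans (_ : 0 <= X) => //; rewrite oppr_le0.
Qed.

Lemma t_bound (J : {set T * T}) :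
  - ((2 * m ^ #|T|)%N%:R : int) <= ((-1) ^+ #|J| * MJ e u v c0 c1 J) * (m ^ g.+1)%N%:R.
Proof.
have hQ : (0 : int) <= (m ^ g.+1)%N%:R by rewrite ler0n.
have h0 : - ((2 * m ^ #|T|)%N%:R : int) <= 0 by rewrite oppr_le0 ler0n.
case: (boolP (J \subset E)) => JE; last by rewrite MJ_notsub // mulr0 mul0r.
case: (boolP (connect (adj J) u v)) => cJ; last by rewrite (MJ_notconn c01) // mulr0 mul0r.
rewrite (MJ_conn c01) //.
set N0 := Ncount c0 u J; set N1 := Ncount c1 u J.
have gJ := connect_card JE cJ.
case: (leqP g #|J|) => hgJ.
  case: (lemma_b e_sym e_irr hg euv JE cJ hgJ) => W [dW uW gW].
  have b0 := N_upper c0 dW uW; have b1 := N_upper c1 dW uW.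
  have mono : (m ^ g.+1 <= m ^ (size W).+1)%N by rewrite leq_pexp2l ?m_pos.
  have hb : ((N0 + N1) * m ^ g.+1 <= 2 * m ^ #|T|)%N.
    rewrite mulnDl mul2n -addnn leq_add //.
      by apply: leq_trans b0; rewrite leq_mul2l mono orbT.
    by apply: leq_trans b1; rewrite leq_mul2l mono orbT.
  rewrite -natrD.
  apply: (le_trans _ (ler_wpM2r hQ (sgn_ge #|J| (ler0n _ (N0 + N1))))).
  by rewrite mulNr -natrM lerN2 ler_nat.
have hJ : #|J|.+1 = g by apply/eqP; rewrite eqn_leq hgJ -addn1 gJ.
have oJ : odd #|J| by move: g_even; rewrite -hJ /= negbK.
rewrite -signr_odd oJ expr1 mulN1r opprK.
by apply: (le_trans h0); rewrite -natrD -natrM ler0n.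
Qed.

Lemma t_Jp : ((m ^ #|T| * m)%N%:R : int) <=
  ((-1) ^+ #|Jp| * MJ e u v c0 c1 Jp) * (m ^ g.+1)%N%:R.
Proof.
rewrite (MJ_conn c01) ?Jp_sub ?Jp_conn // Jp_card.
have os : odd (size p0) by move: g_even; rewrite -hsz /= negbK.
rewrite -signr_odd os expr1 mulN1r opprK -natrD -natrM ler_nat.
have lo := N_lower c0 up0 (mem_head u p0) Jp_coords.
rewrite hsz in lo.
rewrite expnS; apply: (leq_trans (leq_mul lo (leqnn m))).
by rewrite -mulnA [(m ^ g * m)%N]mulnC leq_mul2r leq_addr orbT.
Qed.

Lemma delta_pos : (2 ^ (#|T| * #|T|) * 2 < m)%N ->
  (#|[set f : {ffun T -> 'I_m} | okE e u v f && (f v != swp c0 c1 (f u))]| <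
   #|[set f : {ffun T -> 'I_m} | okE e u v f && (f u != f v)]|)%N.
Proof.
move=> hm.
rewrite -(ltr_nat int) -subr_gt0 delta_eq.
rewrite -(pmulr_lgt0 _ (_ : (0 : int) < (m ^ g.+1)%N%:R)); last by rewrite ltr0n expn_gt0 m_pos.
rewrite mulr_suml (bigD1 Jp) //=.
set k := #|[pred J : {set T * T} | J != Jp]|.
have hk : (k <= 2 ^ (#|T| * #|T|))%N.
  rewrite -card_prod -cardsT -(card_powerset [set: T * T]).
  by apply: subset_leq_card; apply/subsetP => J _; rewrite powersetE subsetT.
have hs : - (((2 * m ^ #|T|) * k)%N%:R : int) <=
    \sum_(J | J != Jp) ((-1) ^+ #|J| * MJ e u v c0 c1 J) * (m ^ g.+1)%N%:R.
  apply: le_trans (ler_sum _ (fun J _ => t_bound J)).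
  by rewrite sumr_const mulNrn -mulrnA.
apply: (lt_le_trans _ (lerD t_Jp hs)).
rewrite subr_gt0 ltr_nat.
have mp : (0 < m ^ #|T|)%N by rewrite expn_gt0 m_pos.
rewrite [(2 * m ^ #|T|)%N]mulnC -mulnA ltn_mul2l mp /=.
by apply: leq_ltn_trans hm; rewrite mulnC leq_mul2r hk orbT.
Qed.

End Final.

Section Cover.
Variable T : finType.
Variable e : rel T.
Hypothesis e_sym : symmetric e.
Hypothesis e_irr : irreflexive e.
Variables u v : T.
Hypothesis euv : e u v.
Variable m : nat.
Variables c0 c1 : 'I_m.
Hypothesis c01 : c0 != c1.

Local Notation sw := (swp c0 c1).

Definition tw (x y : T) (c : 'I_m) : 'I_m :=
  if ((x == u) && (y == v)) || ((x == v) && (y == u)) then sw c else c.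

Lemma tw_sym x y c : tw x y c = tw y x c.
Proof. by rewrite /tw orbC (andbC (y == u)) (andbC (y == v)). Qed.

Lemma tw_eq x y a b : (b == tw x y a) = (a == tw y x b).
Proof.
rewrite -tw_sym /tw; case: ifP => _; last by rewrite eq_sym.
by rewrite eq_sym swp_eq // eq_sym.
Qed.

Definition Hrel (p q : T * 'I_m) : bool :=
  ((p.1 == q.1) && (p.2 != q.2)) || (e p.1 q.1 && (q.2 == tw p.1 q.1 p.2)).

Lemma Hrel_irr p : Hrel p p = false.
Proof. by rewrite /Hrel !eqxx e_irr. Qed.

Lemma Hrel_sym p q : Hrel p q = Hrel q p.
Proof. by rewrite /Hrel eq_sym (eq_sym p.2) e_sym tw_eq. Qed.

Lemma cardV : #|{: T * 'I_m}| = (#|T| * m)%N.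
Proof. by rewrite card_prod card_ord. Qed.

Definition NN := (#|T| * m)%N.
Definition psi (i : 'I_NN) : T * 'I_m := enum_val (cast_ord (esym cardV) i).
Definition phi (p : T * 'I_m) : 'I_NN := cast_ord cardV (enum_rank p).

Lemma psiK : cancel psi phi.
Proof. by move=> i; rewrite /psi /phi enum_valK cast_ordKV. Qed.
Lemma phiK : cancel phi psi.
Proof. by move=> p; rewrite /psi /phi cast_ordK enum_rankK. Qed.

Definition hc (i j : 'I_NN) : bool := Hrel (psi i) (psi j).
Definition Lc (w : T) : {set 'I_NN} := [set i | (psi i).1 == w].

Lemma tw_inv x y c : tw x y (tw x y c) = c.
Proof. by rewrite /tw; case: (_ || _) => //; rewrite (swpK c01). Qed.

Lemma cover_ok : is_mfold_cover e m hc Lc.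
Proof.
have psi_inj : injective psi := can_inj psiK.
apply/andP; split; last first.
  apply/forallP => w; apply/eqP.
  have -> : Lc w = [set phi (w, c) | c : 'I_m].
    apply/setP => i; rewrite inE; apply/eqP/imsetP => [<-|[c _ ->]].
      by exists (psi i).2 => //; rewrite -[(psi i).1]/((psi i).1) -surjective_pairing psiK.
    by rewrite phiK.
  rewrite card_imset ?card_ord //.
  by move=> a b /(can_inj phiK) [].
apply/and5P; split.
- by apply/forallP => x; rewrite /hc Hrel_irr.
- by apply/forallP => x; apply/forallP => y; rewrite /hc Hrel_sym.
- apply/forallP => x; apply/eqP.
  have -> : [set w | x \in Lc w] = [set (psi x).1].
    by apply/setP => w; rewrite !inE eq_sym.
  by rewrite cards1.
- apply/forallP => w; apply/forallP => x; apply/forallP => y; apply/implyP.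
  rewrite !inE => /and3P[/eqP xw /eqP yw xy].
  rewrite /hc /Hrel xw yw eqxx /=.
  apply/orP; left; apply: contra xy => /eqP e2.
  apply/eqP; apply: psi_inj.
  by rewrite [psi x]surjective_pairing [psi y]surjective_pairing xw yw e2.
apply/andP; split.
  apply/forallP => w1; apply/forallP => w2; apply/forallP => x; apply/forallP => y.
  apply/implyP; rewrite !inE => /and3P[/eqP xw /eqP yw].
  rewrite /hc /Hrel xw yw => /orP[/andP[-> _]|/andP[-> _]] //.
  by rewrite orbT.
apply/forallP => w1; apply/forallP => w2; apply/implyP => ew.
have w12 : (w1 == w2) = false by apply/negbTE; apply: contraTneq ew => ->; rewrite e_irr.
apply/andP; split.
  apply/forallP => x; apply/implyP; rewrite inE => /eqP xw.
  rewrite -(cards1 (phi (w2, tw w1 w2 (psi x).2))).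
  apply: subset_leq_card; apply/subsetP => y; rewrite !inE => /andP[/eqP yw].
  rewrite /hc /Hrel xw yw w12 /= => /andP[_ /eqP t].
  by apply/eqP; apply: psi_inj; rewrite phiK [psi y]surjective_pairing yw t.
apply/forallP => y; apply/implyP; rewrite inE => /eqP yw.
rewrite -(cards1 (phi (w1, tw w1 w2 (psi y).2))).
apply: subset_leq_card; apply/subsetP => x; rewrite !inE => /andP[/eqP xw].
rewrite /hc /Hrel xw yw w12 /= => /andP[_ /eqP t].
apply/eqP; apply: psi_inj; rewrite phiK [psi x]surjective_pairing xw t.
by rewrite tw_inv.
Qed.


Lemma chrom_eq : chrom_poly e m = #|[set f : {ffun T -> 'I_m} | okE e u v f && (f u != f v)]|.
Proof.
apply: eq_card => f; rewrite !inE /proper_coloring.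
apply/forallP/andP => [h|[ok fuv] x].
  split; last by move/forallP: (h u) => /(_ v); rewrite euv.
  apply/forall_inP => p; rewrite inE => /and4P[ep _ _ _].
  by move/forallP: (h p.1) => /(_ p.2); rewrite ep.
apply/forallP => y; apply/implyP => exy.
have xy : x != y by apply: contraTneq exy => ->; rewrite e_irr.
case: (eqVneq (x, y) (u, v)) => [[-> ->] //|n1].
case: (eqVneq (x, y) (v, u)) => [[-> ->]|n2]; first by rewrite eq_sym.
move/forall_inP: ok => ok.
case: (ltngtP (enum_rank x) (enum_rank y)) => hr.
- by apply: (ok (x, y)); rewrite inE /= exy hr n1 n2.
- rewrite eq_sym; apply: (ok (y, x)); rewrite inE /= e_sym exy hr.
  rewrite /=; apply/andP; split; [move: n2 | move: n1]; apply: contra => /eqP [-> ->] //.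
- by move: xy; rewrite (enum_rank_inj (ord_inj hr)) eqxx.
Qed.

Lemma DP_le : DP_count T hc <= #|[set f : {ffun T -> 'I_m} | okE e u v f && (f v != sw (f u))]|.
Proof.
have psi_inj : injective psi := can_inj psiK.
pose A := [set I : {set 'I_NN} | [forall x in I, forall y in I, ~~ hc x y] && (#|I| == #|T|)].
pose F (I : {set 'I_NN}) : {ffun T -> 'I_m} :=
  [ffun x => if [pick i in I | (psi i).1 == x] is Some i then (psi i).2 else c0].
have fib : forall I, I \in A -> forall i j, i \in I -> j \in I -> (psi i).1 = (psi j).1 -> i = j.
  move=> I; rewrite inE => /andP[/forall_inP ind _] i j iI jI eij.
  apply/eqP; apply: contraT => nij.
  move: (ind i iI) => /forall_inP /(_ j jI); rewrite /hc /Hrel eij eqxx /=.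
  suff -> : (psi i).2 != (psi j).2 by [].
  apply: contra nij => /eqP e2; apply/eqP; apply: psi_inj.
  by rewrite [psi i]surjective_pairing [psi j]surjective_pairing eij e2.
have sur : forall I, I \in A -> forall x, exists2 i, i \in I & (psi i).1 = x.
  move=> I IA x.
  have : [set (psi i).1 | i in I] = [set: T].
    apply/eqP; rewrite eqEcard subsetT cardsT card_in_imset.
      have := IA; rewrite /A inE => /andP[_ /eqP hI]; by rewrite hI leqnn.
    by move=> i j iI jI; apply: (fib I IA).
  move/setP => /(_ x); rewrite inE => /imsetP [i iI ->].
  by exists i.
have Fval : forall I, I \in A -> forall i, i \in I -> F I (psi i).1 = (psi i).2.
  move=> I IA i iI; rewrite ffunE; case: pickP => [j /andP[jI /eqP jx]|none].
    by rewrite (fib I IA j i).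
  by move: (none i); rewrite iI eqxx.
have Finj : {in A &, injective F}.
  have half : forall I I', I \in A -> I' \in A -> F I = F I' -> I \subset I'.
    move=> I I' IA I'A eF; apply/subsetP => i iI.
    case: (sur I' I'A (psi i).1) => j jI' jx.
    have : F I (psi i).1 = F I' (psi i).1 by rewrite eF.
    rewrite (Fval I IA i iI) -jx (Fval I' I'A j jI') => e2.
    have -> : i = j by apply: psi_inj; rewrite [psi i]surjective_pairing [psi j]surjective_pairing jx e2.
    exact: jI'.
  move=> I I' IA I'A eF; apply/eqP; rewrite eqEsubset.
  by rewrite (half I I') // (half I' I).
have colr : forall I, I \in A -> forall x y, e x y -> F I y != tw x y (F I x).
  move=> I IA x y exy.
  case: (sur I IA x) => i iI xi; case: (sur I IA y) => j jI yj; subst x y.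
  rewrite (Fval I IA i iI) (Fval I IA j jI).
  move: IA; rewrite /A inE => /andP[/forall_inP ind _].
  move: (ind i iI) => /forall_inP /(_ j jI); rewrite /hc /Hrel negb_or => /andP[_].
  by rewrite exy.
rewrite /DP_count -/A -(card_in_imset Finj); apply: subset_leq_card.
apply/subsetP => f /imsetP [I IA ->]; rewrite inE; apply/andP; split.
  apply/forall_inP => p; rewrite inE => /and4P[ep _ n1 n2].
  have := colr I IA _ _ ep; rewrite /tw.
  have -> : ((p.1 == u) && (p.2 == v)) || ((p.1 == v) && (p.2 == u)) = false.
    apply/negbTE; rewrite negb_or; apply/andP; split.
      by apply: contra n1 => /andP[/eqP a /eqP b]; rewrite -a -b -surjective_pairing.
    by apply: contra n2 => /andP[/eqP a /eqP b]; rewrite -a -b -surjective_pairing.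
  by rewrite eq_sym.
by have := colr I IA _ _ euv; rewrite /tw !eqxx.
Qed.

Lemma bigmin_le (I : finType) (P : pred I) (F : I -> nat) x i0 :
  P i0 -> \big[minn/x]_(i | P i) F i <= F i0.
Proof.
move=> Pi0; rewrite unlock.
have : i0 \in index_enum I by rewrite mem_index_enum.
elim: (index_enum I) => [|j r IH] //=; rewrite inE => /orP[/eqP <-|/IH h].
  by rewrite Pi0 geq_minl.
by case: (P j) => //; apply: leq_trans (geq_minr _ _) h.
Qed.

Lemma DP_fn_le : DP_color_fn e m <= DP_count T hc.
Proof.
pose C0 : cover_data T m := ([ffun p => hc p.1 p.2], [ffun w => Lc w]).
have eh : (fun x y => C0.1 (x, y)) = hc.
  by apply: functional_extensionality => x; apply: functional_extensionality => y; rewrite ffunE.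
have eL : (fun w => C0.2 w) = Lc.
  by apply: functional_extensionality => w; rewrite ffunE.
rewrite /DP_color_fn.
have := @bigmin_le _ (fun C : cover_data T m => is_mfold_cover e m (fun x y => C.1 (x, y)) (fun w => C.2 w))
  (fun C : cover_data T m => DP_count T (fun x y => C.1 (x, y))) (m ^ #|T|) C0.
rewrite /= eh eL => h; apply: h.
exact: cover_ok.
Qed.

End Cover.

Theorem mainTheorem1 (T : finType) (e : rel T)
  (e_sym : symmetric e) (e_irr : irreflexive e)
  (e_conn : forall x y : T, connect e x y)
  (g : nat) (hg : is_girth e g) (g_even : ~~ odd g) :
  exists N : nat, forall m : nat, N <= m -> DP_color_fn e m < chrom_poly e m.
Proof.
have hg' := hg; case: hg' => [[s [gs ss]] _].
case: s gs ss => [|u p0] gs ss; first by move: gs; rewrite /graph_cycle.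
pose v := last u p0.
have evu : e v u.
  by move: gs => /and3P[_ _]; rewrite /= rcons_path => /andP[].
have euv : e u v by rewrite e_sym.
exists (2 ^ (#|T| * #|T|) * 2).+1 => m hm.
have m1 : 1 < m.
  by apply: leq_trans hm; rewrite ltnS muln_gt0 expn_gt0.
pose c0 : 'I_m := Ordinal (ltnW m1).
pose c1 : 'I_m := Ordinal m1.
have c01 : c0 != c1 by [].
apply: (leq_ltn_trans (DP_fn_le e_sym e_irr u v c01)).
apply: (leq_ltn_trans (DP_le euv c0 c1)).
rewrite (chrom_eq e_sym e_irr euv m).
exact: (delta_pos e_sym e_irr hg euv c01 gs ss erefl g_even hm).
Qed.
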